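(* Let $(\{U_\alpha\},\{W_\beta\})$ be a solution of the combined $(\mathrm{sl}_n(\mathbb{C}),\mathfrak{t})$-hierarchy, and set $B_{m\alpha}:=\pi_{\geqslant0}(U_\alpha z^m)$ for $m\ge0$ and $C_{m\beta}:=\pi_{<0}(W_\beta z^{m+1})$ for $m<0$. Then for all $\alpha_1,\alpha_2,\beta_1,\beta_2\in\{1,\dots,r\}$: $$\partial_{m_1\beta_1}(B_{m_2\alpha_2})-\partial_{m_2\alpha_2}(C_{m_1\beta_1})-[C_{m_1\beta_1},B_{m_2\alpha_2}]=0\quad (m_1<0,\ m_2\ge0),$$ $$\partial_{m_1\alpha_1}(B_{m_2\alpha_2})-\partial_{m_2\alpha_2}(B_{m_1\alpha_1})-[B_{m_1\alpha_1},B_{m_2\alpha_2}]=0\quad (m_1,m_2\ge0),$$ $$\partial_{m_1\beta_1}(C_{m_2\beta_2})-\partial_{m_2\beta_2}(C_{m_1\beta_1})-[C_{m_1\beta_1},C_{m_2\beta_2}]=0\quad (m_1,m_2<0).$$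
   Context: $R$ is a commutative $\mathbb{C}$-algebra with commuting $\mathbb{C}$-linear derivations $\partial_{m\alpha}$, $m\in\mathbb{Z}$, $1\le\alpha\le r$, acting coefficientwise on matrices and on series. $\mathrm{gl}_n(R)[z,z^{-1})$ consists of formal series $\sum_{i=-\infty}^{N}X_iz^i$ and $\mathrm{gl}_n(R)[z^{-1},z)$ of formal series $\sum_{i=-N}^{\infty}X_iz^i$ ($X_i\in\mathrm{gl}_n(R)$), both with bracket $[X,Y]=\sum[X_i,Y_j]z^{i+j}$; $\mathrm{sl}_n$ versions have traceless coefficients. $\pi_{\geqslant0}$ (resp. $\pi_{<0}$) keeps the terms with $i\ge0$ (resp. $i<0$). $\mathfrak{t}\subset\mathrm{sl}_n(\mathbb{C})$ is commutative of maximal dimension $r$, basis $E_1,\dots,E_r$. $G_{<0}=\{\mathrm{Id}+\sum_{i\ge1}Y_iz^{-i}\mid Y_i\in\mathrm{gl}_n(R)\}$; $G_{\geqslant0}=\{X_0+\sum_{i\ge1}X_iz^i\mid X_i\in\mathrm{gl}_n(R),\ X_0\text{ invertible}\}$. A deformation $(\{U_\alpha\},\{W_\beta\})$ means $U_\alpha=gE_\alpha g^{-1}$ ($1\le\alpha\le r$) for some $g\in G_{<0}$ and $W_\beta=XE_\beta z^{-1}X^{-1}$ ($1\le\beta\le r$) for some $X\in G_{\geqslant0}$. It is a solution of the combined $(\mathrm{sl}_n(\mathbb{C}),\mathfrak{t})$-hierarchy if: for all $m\ge0$ and all $\alpha_1,\alpha_2,\beta$: $\partial_{m\alpha_1}(U_{\alpha_2})=[\pi_{\geqslant0}(U_{\alpha_1}z^m),U_{\alpha_2}]$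 and $\partial_{m\alpha_1}(W_\beta)=[\pi_{\geqslant0}(U_{\alpha_1}z^m),W_\beta]$; and for all $m<0$ and all $\beta_1,\beta_2,\alpha$: $\partial_{m\beta_1}(W_{\beta_2})=[\pi_{<0}(W_{\beta_1}z^{m+1}),W_{\beta_2}]$ and $\partial_{m\beta_1}(U_\alpha)=[\pi_{<0}(W_{\beta_1}z^{m+1}),U_\alpha]$. (Here $\pi_{\geqslant0}(U z^m)$ is a polynomial in $z$ and $\pi_{<0}(Wz^{m+1})$ a polynomial in $z^{-1}$, so all brackets are well defined.) *)

(* Defs.v *)
From HB Require Import structures.
From mathcomp Require Import all_boot all_order all_algebra.
Set Implicit Arguments. Unset Strict Implicit. Unset Printing Implicit Defensive.
Import Order.TTheory GRing.Theory Num.Theory.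
Local Open Scope ring_scope.

Section Defs.
(* C plays the role of the complex numbers (any numeric algebraically closed
   field, e.g. C itself); R is a commutative C-algebra. *)
Variables (C : numClosedFieldType) (R : comAlgType C) (n : nat).

(* Formal Laurent series with coefficients in gl_n(R): z^k-coefficient at k. *)
Definition lser := int -> 'M[R]_n.

(* Formal power series (nat-indexed); used for elements of G_{<0}
   (coefficient of z^{-k}) and of G_{>=0} (coefficient of z^k). *)
Definition pser := nat -> 'M[R]_n.

Definition pmul (f g : pser) : pser :=
  fun k => \sum_(i < k.+1) f i *m g (k - i)%N.

Definition pconst (A : 'M[R]_n) : pser := fun k => if k == 0%N then A else 0.
Definition pone : pser := pconst 1%:M.

(* the series sum_k f_k z^{-k} viewed as a Laurent series *)
Definition negser (f : pser) : lser := fun k => if k <= 0 then f (absz k) else 0.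
(* the series z^{-1} * sum_k h_k z^k viewed as a Laurent series *)
Definition zinvser (h : pser) : lser :=
  fun k => if -1 <= k then h (absz (k + 1)) else 0.

Definition zshift (m : int) (f : lser) : lser := fun k => f (k - m).
Definition pi_ge0 (f : lser) : lser := fun k => if 0 <= k then f k else 0.
Definition pi_lt0 (f : lser) : lser := fun k => if k < 0 then f k else 0.

(* Product P*Y and Y*P of a Laurent polynomial P whose support lies in the
   integer window [a, b] with an arbitrary formal series Y: each coefficient
   is the finite sum over the support of P (this is the usual product of
   series; it does not depend on the window as long as it contains supp P). *)
Definition lmulP (a b : int) (P Y : lser) : lser :=
  fun k => \sum_(j < (absz (b - a)).+1) P (a + j%:Z) *m Y (k - (a + j%:Z)).
Definition rmulP (a b : int) (P Y : lser) : lser :=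
  fun k => \sum_(j < (absz (b - a)).+1) Y (k - (a + j%:Z)) *m P (a + j%:Z).
Definition lbr (a b : int) (P Y : lser) : lser :=
  fun k => lmulP a b P Y k - rmulP a b P Y k.

Definition dser (d : R -> R) (f : lser) : lser := fun k => map_mx d (f k).

Definition embC (A : 'M[C]_n) : 'M[R]_n := map_mx (fun c : C => c%:A) A.

Definition Bop (U : lser) (m : int) : lser := pi_ge0 (zshift m U).
Definition Cop (W : lser) (m : int) : lser := pi_lt0 (zshift (m + 1) W).

End Defs.

Definition is_derivation (C : numClosedFieldType) (R : comAlgType C)
    (d : R -> R) : Prop :=
  [/\ forall x y, d (x + y) = d x + d y,
      forall (c : C) x, d (c *: x) = c *: d x
    & forall x y, d (x * y) = d x * y + x * d y].

Definition derivation_family (C : numClosedFieldType) (R : comAlgType C) (r : nat)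
    (D : int -> 'I_r -> R -> R) : Prop :=
  (forall m a, is_derivation (D m a)) /\
  (forall m a m' a' x, D m a (D m' a' x) = D m' a' (D m a x)).

(* E_1..E_r is a basis of a commutative subalgebra t of sl_n(C) of maximal
   dimension r among commutative subalgebras of sl_n(C). *)
Definition is_t_basis (C : numClosedFieldType) (n r : nat) (E : 'I_r -> 'M[C]_n)
    : Prop :=
  [/\ forall a, \tr (E a) = 0,
      forall a b, E a *m E b = E b *m E a,
      row_free (\matrix_(i < r) mxvec (E i))
    & forall (s : nat) (F : 'I_s -> 'M[C]_n),
        (forall i, \tr (F i) = 0) ->
        (forall i j, F i *m F j = F j *m F i) ->
        row_free (\matrix_(i < s) mxvec (F i)) -> (s <= r)%N].

(* ({U_alpha},{W_beta}) is a deformation: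
   U_alpha = g E_alpha g^{-1}, g in G_{<0};
   W_beta = X E_beta z^{-1} X^{-1}, X in G_{>=0}. *)
Definition deformation (C : numClosedFieldType) (R : comAlgType C) (n r : nat)
    (E : 'I_r -> 'M[C]_n) (U W : 'I_r -> lser R n) : Prop :=
  (exists g ginv : pser R n,
     [/\ g 0%N = 1%:M, pmul g ginv = pone R n, pmul ginv g = pone R n
       & forall a, U a = negser (pmul (pmul g (pconst (embC R (E a)))) ginv)]) /\
  (exists X Xinv : pser R n,
     [/\ exists Y : 'M[R]_n, X 0%N *m Y = 1%:M /\ Y *m X 0%N = 1%:M,
         pmul X Xinv = pone R n, pmul Xinv X = pone R n
       & forall b, W b = zinvser (pmul (pmul X (pconst (embC R (E b)))) Xinv)]).

Definition combined_solution (C : numClosedFieldType) (R : comAlgType C)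
    (n r : nat) (D : int -> 'I_r -> R -> R) (U W : 'I_r -> lser R n) : Prop :=
  (forall (m : int) (a1 a2 b : 'I_r), 0 <= m ->
     dser (D m a1) (U a2) = lbr 0 m (Bop (U a1) m) (U a2) /\
     dser (D m a1) (W b) = lbr 0 m (Bop (U a1) m) (W b)) /\
  (forall (m : int) (b1 b2 a : 'I_r), m < 0 ->
     dser (D m b1) (W b2) = lbr m (-1) (Cop (W b1) m) (W b2) /\
     dser (D m b1) (U a) = lbr m (-1) (Cop (W b1) m) (U a)).

(* Main.v *)
Require Import Defs.
From HB Require Import structures.
From mathcomp Require Import all_boot all_order all_algebra.
From mathcomp Require Import zify.
From Stdlib Require Import FunctionalExtensionality.
Import Order.TTheory GRing.Theory Num.Theory.
Local Open Scope ring_scope.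
Set Implicit Arguments. Unset Strict Implicit. Unset Printing Implicit Defensive.

Section W.
Variables (C : numClosedFieldType) (R : comAlgType C) (n : nat).
Local Notation M := 'M[R]_n.

Definition wsum (a b : int) (f : int -> M) : M :=
  \sum_(j < (absz ((b - a)%R)).+1) f (a + j%:Z).

Lemma wsum_ext (a b : int) f g : a <= b -> (forall j, a <= j <= b -> f j = g j) ->
  wsum a b f = wsum a b g.
Proof. move=> ab h; apply: eq_bigr => j _; apply: h; have := ltn_ord j; lia. Qed.

Lemma wsum_zero (a b : int) f : a <= b -> (forall j, a <= j <= b -> f j = 0) -> wsum a b f = 0.
Proof. move=> ab h; apply: big1 => j _; apply: h; have := ltn_ord j; lia. Qed.

Lemma wsumB a b f g : wsum a b f - wsum a b g = wsum a b (fun j => f j - g j).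
Proof. by rewrite /wsum -sumrB. Qed.

Lemma wsum_win (a b a' b' : int) f : a <= b -> a' <= a -> b <= b' ->
  wsum a b f = wsum a' b' (fun j => if (a <= j) && (j <= b) then f j else 0).
Proof.
move=> ab aa bb; rewrite /wsum.
have [p Hp] : {p | absz (a - a') = p} by exists (absz (a - a')).
move HL: (absz ((b - a)%R)).+1 => L.
have eN : ((absz (b' - a')).+1 = p + L + (absz (b' - b)))%N by lia.
rewrite eN -(big_mkord xpredT (fun j : nat => if (a <= a' + j%:Z) && (a' + j%:Z <= b) then f (a' + j%:Z) else 0)).
symmetry.
rewrite (big_cat_nat _ (leq_addr _ _)) /=; last by lia.
rewrite (big_cat_nat _ (leq_addr _ _)) /=; last by lia.
rewrite big1_seq ?add0r; last first.
  move=> i /andP[_]; rewrite mem_iota => /andP[_ hi]; rewrite ifF //.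
  apply/negbTE; rewrite negb_and; apply/orP; left; rewrite -ltNge; lia.
rewrite [X in _ + X]big1_seq ?addr0; last first.
  move=> i /andP[_]; rewrite mem_iota => /andP[hi1 hi2]; rewrite ifF //.
  apply/negbTE; rewrite negb_and; apply/orP; right; rewrite -ltNge; lia.
rewrite -{1}(add0n p) big_addn addKn big_mkord; apply: eq_bigr => i _.
move: (ltn_ord i) => hi; rewrite ifT; last by lia.
congr f; lia.
Qed.

Lemma wsum_supp (a b c d : int) f : c <= d -> a <= c -> d <= b ->
  (forall j, ~~ ((c <= j) && (j <= d)) -> f j = 0) -> wsum a b f = wsum c d f.
Proof.
move=> cd ac db h; rewrite (wsum_win f cd ac db); apply: wsum_ext; first lia.
move=> j _; case: ifP => // hj; rewrite h // hj //.
Qed.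

Lemma wsum_refl (a b k : int) f : a <= b ->
  wsum a b f = wsum (k - b) (k - a) (fun j => f (k - j)).
Proof.
move=> ab; rewrite /wsum.
have -> : absz ((k - a - (k - b))%R) = absz ((b - a)%R) by lia.
rewrite (reindex_inj rev_ord_inj) /=; apply: eq_bigr => i _; congr f.
move: (ltn_ord i) => hi. lia.
Qed.
End W.

Lemma wsumD (C : numClosedFieldType) (R : comAlgType C) (n : nat) (a b : int) (f g : int -> 'M[R]_n) :
  wsum a b f + wsum a b g = wsum a b (fun j => f j + g j).
Proof. by rewrite /wsum -big_split. Qed.

Section P.
Variables (C : numClosedFieldType) (R : comAlgType C) (n : nat).
Local Notation M := 'M[R]_n.

Lemma tri k (F : nat -> nat -> M) :
  \sum_(i < k.+1) \sum_(j < i.+1) F j i = \sum_(j < k.+1) \sum_(l < (k - j).+1) F j (j + l)%N.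
Proof.
elim: k => [|k IH]; first by rewrite !big_ord1.
rewrite big_ord_recr /= IH [RHS]big_ord_recr /= subnn big_ord1 addn0.
rewrite [\sum_(j < k.+2) _]big_ord_recr /= addrA; congr (_ + _).
rewrite -big_split /=; apply: eq_bigr => j _.
have hj : (j <= k)%N by have := ltn_ord j.
rewrite subSn // [RHS]big_ord_recr /=; congr (_ + F _ _); lia.
Qed.

Lemma pmulA (f g h : pser R n) : pmul (pmul f g) h = pmul f (pmul g h).
Proof.
apply: functional_extensionality => k; rewrite /pmul.
under eq_bigr do rewrite mulmx_suml.
rewrite (tri k (fun j i => f j *m g (i - j)%N *m h (k - i)%N)).
apply: eq_bigr => j _; rewrite mulmx_sumr; apply: eq_bigr => l _.
by rewrite mulmxA addKn subnDA.
Qed.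

Lemma pmul_constl (A : M) (f : pser R n) : pmul (pconst A) f = fun k => A *m f k.
Proof.
apply: functional_extensionality => k; rewrite /pmul big_ord_recl /= subn0.
rewrite big1 ?addr0 // => i _; by rewrite /pconst /= mul0mx.
Qed.

Lemma pmul_constr (A : M) (f : pser R n) : pmul f (pconst A) = fun k => f k *m A.
Proof.
apply: functional_extensionality => k; rewrite /pmul big_ord_recr /= subnn.
rewrite big1 ?add0r // => i _; rewrite /pconst ifF ?mulmx0 //.
have := ltn_ord i; lia.
Qed.

Lemma pconstM (A B : M) : pmul (pconst A) (pconst B) = pconst (A *m B).
Proof.
rewrite pmul_constl; apply: functional_extensionality => k; rewrite /pconst.
by case: ifP; rewrite ?mulmx0.
Qed.

Lemma pone_l (f : pser R n) : pmul (pone R n) f = f.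
Proof.
rewrite /pone pmul_constl; apply: functional_extensionality => k; by rewrite mul1mx.
Qed.

Lemma conj_comm (g gi : pser R n) (A B : M) : pmul gi g = pone R n -> A *m B = B *m A ->
  pmul (pmul (pmul g (pconst A)) gi) (pmul (pmul g (pconst B)) gi) =
  pmul (pmul (pmul g (pconst B)) gi) (pmul (pmul g (pconst A)) gi).
Proof.
move=> hg hAB.
have key : forall A B : M, pmul (pmul (pmul g (pconst A)) gi) (pmul (pmul g (pconst B)) gi)
   = pmul (pmul g (pconst (A *m B))) gi.
  move=> A' B'.
  rewrite pmulA -(pmulA gi) -(pmulA gi) hg pone_l -pmulA.
  by rewrite (pmulA g) pconstM.
by rewrite !key hAB.
Qed.
End P.

Section Q.
Variables (C : numClosedFieldType) (R : comAlgType C) (n : nat).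
Local Notation M := 'M[R]_n.

Definition nser (f : pser R n) (s : int) : int -> M :=
  fun j => if j <= s then f (absz ((s - j)%R)) else 0.
Definition posr (f : pser R n) (s : int) : int -> M :=
  fun j => if s <= j then f (absz ((j - s)%R)) else 0.

Lemma conv_nser (f g : pser R n) (s t k a b : int) : a <= b -> a <= k - t -> s <= b ->
  wsum a b (fun j => nser f s j *m nser g t (k - j)) =
  if k <= s + t then pmul f g (absz ((s + t - k)%R)) else 0.
Proof.
move=> ab ha hb; case: ifP => hk.
  rewrite (@wsum_supp _ _ _ a b (k - t) s); try lia.
    rewrite /wsum /pmul.
    have -> : absz ((s - (k - t))%R) = absz ((s + t - k)%R) by lia.
    rewrite (reindex_inj rev_ord_inj) /=; apply: eq_bigr => i _.
    move: (ltn_ord i) => hi.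
    rewrite /nser ifT; last by lia.
    rewrite ifT; last by lia.
    congr (f _ *m g _); lia.
  move=> j hj; rewrite /nser; case: ifP => h1; last by rewrite mul0mx.
  rewrite ifF ?mulmx0 //; lia.
apply: wsum_zero => // j _; rewrite /nser; case: ifP => h1; last by rewrite mul0mx.
rewrite ifF ?mulmx0 //; lia.
Qed.

Lemma conv_nser' (f g : pser R n) (s t k a b : int) : a <= b -> a <= k - t -> s <= b ->
  wsum a b (fun j => nser g t (k - j) *m nser f s j) =
  if k <= s + t then pmul g f (absz ((s + t - k)%R)) else 0.
Proof.
move=> ab ha hb; case: ifP => hk.
  rewrite (@wsum_supp _ _ _ a b (k - t) s); try lia.
    rewrite /wsum /pmul.
    have -> : absz ((s - (k - t))%R) = absz ((s + t - k)%R) by lia.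
    apply: eq_bigr => i _.
    move: (ltn_ord i) => hi.
    rewrite /nser ifT; last by lia.
    rewrite ifT; last by lia.
    congr (g _ *m f _); lia.
  move=> j hj; rewrite /nser; case: ifP => h1; last by rewrite mul0mx.
  rewrite ifF ?mulmx0 //; lia.
apply: wsum_zero => // j _; rewrite /nser; case: ifP => h1; last by rewrite mul0mx.
rewrite ifF ?mulmx0 //; lia.
Qed.

Lemma conv_posr (f g : pser R n) (s t k a b : int) : a <= b -> a <= s -> k - t <= b ->
  wsum a b (fun j => posr f s j *m posr g t (k - j)) =
  if s + t <= k then pmul f g (absz ((k - s - t)%R)) else 0.
Proof.
move=> ab ha hb; case: ifP => hk.
  rewrite (@wsum_supp _ _ _ a b s (k - t)); try lia.
    rewrite /wsum /pmul.
    have -> : absz ((k - t - s)%R) = absz ((k - s - t)%R) by lia.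
    apply: eq_bigr => i _.
    move: (ltn_ord i) => hi.
    rewrite /posr ifT; last by lia.
    rewrite ifT; last by lia.
    congr (f _ *m g _); lia.
  move=> j hj; rewrite /posr; case: ifP => h1; last by rewrite mul0mx.
  rewrite ifF ?mulmx0 //; lia.
apply: wsum_zero => // j _; rewrite /posr; case: ifP => h1; last by rewrite mul0mx.
rewrite ifF ?mulmx0 //; lia.
Qed.

Lemma conv_posr' (f g : pser R n) (s t k a b : int) : a <= b -> a <= s -> k - t <= b ->
  wsum a b (fun j => posr g t (k - j) *m posr f s j) =
  if s + t <= k then pmul g f (absz ((k - s - t)%R)) else 0.
Proof.
move=> ab ha hb; case: ifP => hk.
  rewrite (@wsum_supp _ _ _ a b s (k - t)); try lia.
    rewrite /wsum /pmul.
    have -> : absz ((k - t - s)%R) = absz ((k - s - t)%R) by lia.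
    rewrite (reindex_inj rev_ord_inj) /=; apply: eq_bigr => i _.
    move: (ltn_ord i) => hi.
    rewrite /posr ifT; last by lia.
    rewrite ifT; last by lia.
    congr (g _ *m f _); lia.
  move=> j hj; rewrite /posr; case: ifP => h1; last by rewrite mul0mx.
  rewrite ifF ?mulmx0 //; lia.
apply: wsum_zero => // j _; rewrite /posr; case: ifP => h1; last by rewrite mul0mx.
rewrite ifF ?mulmx0 //; lia.
Qed.

Lemma comm_nser (f g : pser R n) (s t k a b : int) : pmul f g = pmul g f ->
  a <= b -> a <= k - t -> s <= b ->
  wsum a b (fun j => nser f s j *m nser g t (k - j) - nser g t (k - j) *m nser f s j) = 0.
Proof.
move=> hfg ab ha hb; rewrite -wsumB conv_nser // conv_nser' // hfg.
by case: ifP; rewrite subrr.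
Qed.

Lemma comm_posr (f g : pser R n) (s t k a b : int) : pmul f g = pmul g f ->
  a <= b -> a <= s -> k - t <= b ->
  wsum a b (fun j => posr f s j *m posr g t (k - j) - posr g t (k - j) *m posr f s j) = 0.
Proof.
move=> hfg ab ha hb; rewrite -wsumB conv_posr // conv_posr' // hfg.
by case: ifP; rewrite subrr.
Qed.
End Q.

Section Dd.
Variables (C : numClosedFieldType) (R : comAlgType C) (n : nat).
Local Notation M := 'M[R]_n.

Lemma deriv0 (d : R -> R) : is_derivation d -> d 0 = 0.
Proof.
case=> hadd _ _; have h := hadd 0 0; rewrite addr0 in h.
by apply: (addrI (d 0)); rewrite -h addr0.
Qed.

Lemma dser_ge0 (d : R -> R) (f : lser R n) k : is_derivation d ->
  dser d (pi_ge0 f) k = if 0 <= k then dser d f k else 0.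
Proof.
move=> hd; rewrite /dser /pi_ge0; case: ifP => // _.
by apply/matrixP => i j; rewrite !mxE deriv0.
Qed.

Lemma dser_lt0 (d : R -> R) (f : lser R n) k : is_derivation d ->
  dser d (pi_lt0 f) k = if k < 0 then dser d f k else 0.
Proof.
move=> hd; rewrite /dser /pi_lt0; case: ifP => // _.
by apply/matrixP => i j; rewrite !mxE deriv0.
Qed.

Lemma dser_zshift (d : R -> R) (f : lser R n) m k :
  dser d (zshift m f) k = dser d f (k - m).
Proof. by []. Qed.

Lemma lbrE (a b : int) (P Y : lser R n) k :
  lbr a b P Y k = wsum a b (fun j => P j *m Y (k - j) - Y (k - j) *m P j).
Proof. by rewrite /lbr /lmulP /rmulP /wsum -sumrB. Qed.

Lemma embC_comm (A B : 'M[C]_n) : A *m B = B *m A ->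
  embC R A *m embC R B = embC R B *m embC R A.
Proof.
move=> h; rewrite /embC.
have e : forall X : 'M[C]_n, map_mx (fun c : C => c%:A) X = map_mx (in_alg R) X by [].
by rewrite !e -!map_mxM h.
Qed.
End Dd.

Lemma canc (C : numClosedFieldType) (R : comAlgType C) (n : nat) (a b : 'M[R]_n) : a - b + (b - a) = 0.
Proof. by rewrite addrA subrK subrr. Qed.

Ltac pw hx hy :=
  (match type of hx with is_true ?b -> _ => case: (boolP b) => [/hx ->|?] end);
  (match type of hy with is_true ?b -> _ => case: (boolP b) => [/hy ->|?] end);
  repeat (case: ifP => ?); try (exfalso; lia);
  rewrite ?mul0mx ?mulmx0 ?subrr ?addr0 ?add0r ?subr0 ?sub0r ?oppr0 ?opprB ?canc //;
  try (rewrite -addrA canc addr0 //).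

Unset Implicit Arguments.

Theorem proposition3p1 (C : numClosedFieldType) (R : comAlgType C) (n r : nat)
    (E : 'I_r -> 'M[C]_n) (D : int -> 'I_r -> R -> R)
    (U W : 'I_r -> lser R n) :
  is_t_basis E -> derivation_family D -> deformation E U W ->
  combined_solution D U W ->
  [/\ (forall (m1 m2 : int) (b1 a2 : 'I_r), m1 < 0 -> 0 <= m2 -> forall k,
         dser (D m1 b1) (Bop (U a2) m2) k - dser (D m2 a2) (Cop (W b1) m1) k
         - lbr m1 (-1) (Cop (W b1) m1) (Bop (U a2) m2) k = 0),
      (forall (m1 m2 : int) (a1 a2 : 'I_r), 0 <= m1 -> 0 <= m2 -> forall k,
         dser (D m1 a1) (Bop (U a2) m2) k - dser (D m2 a2) (Bop (U a1) m1) k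
         - lbr 0 m1 (Bop (U a1) m1) (Bop (U a2) m2) k = 0)
    & (forall (m1 m2 : int) (b1 b2 : 'I_r), m1 < 0 -> m2 < 0 -> forall k,
         dser (D m1 b1) (Cop (W b2) m2) k - dser (D m2 b2) (Cop (W b1) m1) k
         - lbr m1 (-1) (Cop (W b1) m1) (Cop (W b2) m2) k = 0)].
Proof.
move=> [hEtr hEc _ _] [hDd _] [[g [gi [_ _ hgig hU]]] [X [Xi [_ _ hXX hW]]]] [hP hN].
have hU0 : forall a (x : int), 0 < x -> U a x = 0.
  by move=> a x hx; rewrite hU /negser ifF //; lia.
have hW0 : forall b (x : int), x < -1 -> W b x = 0.
  by move=> b x hx; rewrite hW /zinvser ifF //; lia.
have hUc : forall a1 a2 (s t k A B : int), A <= B -> A <= k - t -> s <= B ->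
   wsum A B (fun j => U a1 (j - s) *m U a2 (k - j - t) - U a2 (k - j - t) *m U a1 (j - s)) = 0.
  have e : forall a s j, U a (j - s) = nser (pmul (pmul g (pconst (embC R (E a)))) gi) s j.
    move=> a s0 j0; rewrite hU /negser /nser.
    have -> : (j0 - s0 <= 0) = (j0 <= s0) by lia.
    case: ifP => // h; congr (pmul _ _ _); lia.
  move=> a1 a2 s t k A B hAB hA hB.
  rewrite -(comm_nser (f := pmul (pmul g (pconst (embC R (E a1)))) gi)
             (g := pmul (pmul g (pconst (embC R (E a2)))) gi) (s := s) (t := t) (k := k) _ hAB hA hB);
    last by apply: conj_comm => //; apply: embC_comm.
  apply: wsum_ext => // j _.
  by rewrite !e.
have hWc : forall b1 b2 (s t k A B : int), A <= B -> A <= s -> k - t <= B ->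
   wsum A B (fun j => W b1 (j - s - 1) *m W b2 (k - j - t - 1) - W b2 (k - j - t - 1) *m W b1 (j - s - 1)) = 0.
  have e : forall b s j, W b (j - s - 1) = posr (pmul (pmul X (pconst (embC R (E b)))) Xi) s j.
    move=> b s0 j0; rewrite hW /zinvser /posr.
    have -> : (-1 <= j0 - s0 - 1) = (s0 <= j0) by lia.
    case: ifP => // h; congr (pmul _ _ _); lia.
  move=> b1 b2 s t k A B hAB hA hB.
  rewrite -(comm_posr (f := pmul (pmul X (pconst (embC R (E b1)))) Xi)
             (g := pmul (pmul X (pconst (embC R (E b2)))) Xi) (s := s) (t := t) (k := k) _ hAB hA hB);
    last by apply: conj_comm => //; apply: embC_comm.
  apply: wsum_ext => // j _.
  by rewrite !e.
have hd : forall m a, is_derivation (D m a) by [].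
split.
- move=> m1 m2 b1 a2 h1 h2 k.
  rewrite /Bop /Cop dser_ge0 // dser_lt0 // !dser_zshift (hN m1 b1 b1 a2 h1).2 (hP m2 a2 a2 b1 h2).2 !lbrE.
  case: ifP => hk0; case: ifP => hk1; try lia.
  + rewrite subr0 wsumB; apply: wsum_zero => [|j hj]; first lia.
    rewrite /Bop /Cop /pi_ge0 /pi_lt0 /zshift.
    have -> : k - j - m2 = k - m2 - j by lia.
    do 2 (rewrite ifT; last lia).
    by rewrite subrr.
  + set Mw : int := `|k| + `|m1| + `|m2| + 2.
    have e0 : forall x y : 'M[R]_n, 0 - x - y = - (x + y) by move=> x y; rewrite opprD sub0r.
    rewrite e0 (wsum_refl k); last lia.
    rewrite (wsum_win (a' := - Mw) (b' := Mw) _ _ _ _); try lia.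
    rewrite [X in _ + X](wsum_win (a' := - Mw) (b' := Mw) _ _ _ _); try lia.
    rewrite wsumD; apply/eqP; rewrite oppr_eq0; apply/eqP.
    apply: wsum_zero => [|j hj]; first lia.
    rewrite /Bop /Cop /pi_ge0 /pi_lt0 /zshift.
    have -> : k - (m1 + 1) - (k - j) = j - (m1 + 1) by lia.
    have := hU0 a2 (k - j - m2); have := hW0 b1 (j - (m1 + 1)).
    move: (U a2 (k - j - m2)) (W b1 (j - (m1 + 1))) => x y hy hx.
    pw hx hy.
- move=> m1 m2 a1 a2 h1 h2 k.
  rewrite /Bop !dser_ge0 // !dser_zshift (hP m1 a1 a2 a2 h1).1 (hP m2 a2 a1 a1 h2).1 !lbrE.
  case: ifP => hk0.
  + set Mw : int := `|k| + `|m1| + `|m2| + 2.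
    rewrite [X in _ - X - _](wsum_refl k); last lia.
    rewrite (wsum_win (a' := - Mw) (b' := Mw) _ _ _ _); try lia.
    rewrite [X in _ - X - _](wsum_win (a' := - Mw) (b' := Mw) _ _ _ _); try lia.
    rewrite [X in _ - _ - X](wsum_win (a' := - Mw) (b' := Mw) _ _ _ _); try lia.
    rewrite -[RHS](hUc a1 a2 m1 m2 k (- Mw) Mw); try lia.
    rewrite !wsumB; apply: wsum_ext => [|j hj]; first lia.
    rewrite /Bop /pi_ge0 /zshift.
    have -> : k - m2 - j = k - j - m2 by lia.
    have -> : k - m1 - (k - j) = j - m1 by lia.
    have := hU0 a1 (j - m1); have := hU0 a2 (k - j - m2).
    move: (U a1 (j - m1)) (U a2 (k - j - m2)) => x y hy hx.
    pw hx hy.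
  + rewrite subrr sub0r; apply/eqP; rewrite oppr_eq0; apply/eqP.
    apply: wsum_zero => // j hj; rewrite /pi_ge0 /zshift.
    repeat (case: ifP => ?); try (exfalso; lia); by rewrite ?mul0mx ?mulmx0 subrr.
- move=> m1 m2 b1 b2 h1 h2 k.
  rewrite /Cop !dser_lt0 // !dser_zshift (hN m1 b1 b2 b2 h1).1 (hN m2 b2 b1 b1 h2).1 !lbrE.
  case: ifP => hk0.
  + set Mw : int := `|k| + `|m1| + `|m2| + 2.
    rewrite [X in _ - X - _](wsum_refl k); last lia.
    rewrite (wsum_win (a' := - Mw) (b' := Mw) _ _ _ _); try lia.
    rewrite [X in _ - X - _](wsum_win (a' := - Mw) (b' := Mw) _ _ _ _); try lia.
    rewrite [X in _ - _ - X](wsum_win (a' := - Mw) (b' := Mw) _ _ _ _); try lia.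
    rewrite -[RHS](hWc b1 b2 m1 m2 k (- Mw) Mw); try lia.
    rewrite !wsumB; apply: wsum_ext => [|j hj]; first lia.
    rewrite /Cop /pi_lt0 /zshift.
    have -> : k - (m2 + 1) - j = k - j - m2 - 1 by lia.
    have -> : k - j - (m2 + 1) = k - j - m2 - 1 by lia.
    have -> : k - (m1 + 1) - (k - j) = j - m1 - 1 by lia.
    have -> : j - (m1 + 1) = j - m1 - 1 by lia.
    have := hW0 b1 (j - m1 - 1); have := hW0 b2 (k - j - m2 - 1).
    move: (W b1 (j - m1 - 1)) (W b2 (k - j - m2 - 1)) => x y hy hx.
    pw hx hy.
  + rewrite subrr sub0r; apply/eqP; rewrite oppr_eq0; apply/eqP.
    apply: wsum_zero => // j hj; rewrite /pi_lt0 /zshift.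
    repeat (case: ifP => ?); try (exfalso; lia); by rewrite ?mul0mx ?mulmx0 subrr.
Qed.
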